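(* Suppose the nearest neighbor algorithm (NNA) terminates normally and outputs the route $\mathcal{M}_2=(1,m_2^*,\dots,m_{L_2}^* )$ with $m_{L_2}^*=D$. Let $\mathcal{M}_1=(1,m_2,\dots,m_{L_1})$ with $m_{L_1}=D$ be any route from the source to the destination, where $L_1$ need not equal $L_2$. Then $R_{\mathrm{DF}}(\mathcal{M}_2)\ge R_{\mathrm{DF}}(\mathcal{M}_1)$.
   Context: Network: a finite set of nodes $\mathcal{S}=\{1,2,\dots,D\}$, $D\ge 2$. Node $1$ is the source and node $D$ is the destination. Received powers: for distinct nodes $i,t$, the power received at $t$ from $i$ is a positive real number $P_{it}$. All receivers have the same noise power $N>0$. Routes: a route is an ordered tuple of distinct nodes $\mathcal{M}=(m_1,\dots,m_L)$ with $m_1=1$ and $L\ge1$. It is a route from the source to the destination if moreover $m_L=D$. For $a\notin\mathcal{M}$, $\mathcal{M}\cup\{a\}$ denotes $(m_1,\dots,m_L,a)$. DF with independent codewords: the reception rate of node $m_t$ ($2\le t\le L$) in route $\mathcal{M}$ is $$R_{m_t}(\mathcal{M})=\tfrac12\log\Big(1+N^{-1}\sum_{i=1}^{t-1}P_{m_i m_t}\Big).$$ The supported DF rate (for $L\ge2$) is $R_{\mathrm{DF}}(\mathcal{M})=\min_{2\le t\le L}R_{m_t}(\mathcal{M})$. Nearest neighbor: node $i\notin\mathcal{M}$ is a nearest neighbor with respect to route $\mathcal{M}$ iff $P_{mi}\ge P_{mj}$ for all $m\in\mathcal{M}$ and all $j\in\mathcal{S}\setminus(\mathcal{M}\cup\{i\})$.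 NNA: 1. Start with $\mathcal{M}=(1)$. 2. If there is a unique nearest neighbor $i^*$ with respect to the current $\mathcal{M}$, set $\mathcal{M}\leftarrow\mathcal{M}\cup\{i^*\}$; otherwise the algorithm terminates prematurely. 3. Repeat step 2 until node $D$ has been appended, in which case the algorithm terminates normally and outputs $\mathcal{M}$. *)

(* Defs.v *)
From Stdlib Require Import Reals List Arith.
Import ListNotations.
Open Scope R_scope.

(* Nodes are natural numbers 1..D; a route is a list of nodes. *)
Definition in_S (D i : nat) : Prop := (1 <= i <= D)%nat.

Definition is_route (D : nat) (M : list nat) : Prop :=
  NoDup M /\ (forall m, In m M -> in_S D m) /\ head M = Some 1%nat.

Definition is_sd_route (D : nat) (M : list nat) : Prop :=
  is_route D M /\ last M 0%nat = D.

(* total power received by the node at (0-based) position t from the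
   nodes at positions 0..t-1 of M *)
Definition recv_power (P : nat -> nat -> R) (M : list nat) (t : nat) : R :=
  fold_right Rplus 0
    (map (fun i => P (nth i M 0%nat) (nth t M 0%nat)) (seq 0 t)).

(* reception rate of the node at 0-based position t (i.e. m_{t+1}) *)
Definition recv_rate (P : nat -> nat -> R) (N : R) (M : list nat) (t : nat) : R :=
  / 2 * ln (1 + / N * recv_power P M t).

(* minimum of a nonempty list (0 for the empty list, never used) *)
Definition Rmin_list (l : list R) : R :=
  match l with
  | [] => 0
  | r :: rs => fold_left Rmin rs r
  end.

(* DF rate: minimum over the receiving positions 1..L-1 (0-based),
   i.e. t = 2..L in the paper's 1-based indexing. Meaningful for L >= 2. *)
Definition R_DF (P : nat -> nat -> R) (N : R) (M : list nat) : R :=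
  Rmin_list (map (recv_rate P N M) (seq 1 (length M - 1))).

Definition nearest_neighbor (D : nat) (P : nat -> nat -> R) (M : list nat) (i : nat) : Prop :=
  in_S D i /\ ~ In i M /\
  forall m j, In m M -> in_S D j -> ~ In j M -> j <> i -> P m i >= P m j.

(* Routes reachable by running NNA: start from (1); while D has not been
   appended, append the unique nearest neighbor (if it exists). *)
Inductive nna_reaches (D : nat) (P : nat -> nat -> R) : list nat -> Prop :=
  | nna_start : nna_reaches D P [1%nat]
  | nna_step : forall M i,
      nna_reaches D P M ->
      ~ In D M ->
      nearest_neighbor D P M i ->
      (forall j, nearest_neighbor D P M j -> j = i) ->
      nna_reaches D P (M ++ [i]).

Definition nna_output (D : nat) (P : nat -> nat -> R) (M : list nat) : Prop :=
  nna_reaches D P M /\ In D M.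

(* Main.v *)
Require Import Defs.
From Stdlib Require Import Reals List Arith Lia Lra.
Import ListNotations.
Open Scope R_scope.

Definition sumR (l : list R) := fold_right Rplus 0 l.

Lemma sumR_app l1 l2 : sumR (l1 ++ l2) = sumR l1 + sumR l2.
Proof. induction l1; simpl; unfold sumR in *; simpl; [lra|]. rewrite IHl1; lra. Qed.

Lemma sum_nonneg (f : nat -> R) l : (forall x, In x l -> 0 <= f x) -> 0 <= sumR (map f l).
Proof.
  induction l; simpl; intros H; unfold sumR in *; simpl; [lra|].
  assert (0 <= f a) by auto. assert (0 <= fold_right Rplus 0 (map f l)) by auto. lra.
Qed.

Lemma sum_le_pointwise (f g : nat -> R) l : (forall x, In x l -> f x <= g x) ->
  sumR (map f l) <= sumR (map g l).
Proof.
  induction l; simpl; intros H; unfold sumR in *; simpl; [lra|].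
  assert (f a <= g a) by auto. assert (fold_right Rplus 0 (map f l) <= fold_right Rplus 0 (map g l)) by auto. lra.
Qed.

Lemma sum_sub (f : nat -> R) l1 : NoDup l1 -> forall l2, NoDup l2 ->
  (forall x, In x l1 -> In x l2) -> (forall x, In x l2 -> 0 <= f x) ->
  sumR (map f l1) <= sumR (map f l2).
Proof.
  induction 1 as [|a l1 Ha Hl1 IH]; intros l2 Hl2 Hinc Hpos.
  - simpl. apply sum_nonneg; auto.
  - assert (In a l2) by (apply Hinc; simpl; auto).
    destruct (in_split _ _ H) as [u [v Huv]]. subst l2.
    rewrite map_app, sumR_app. simpl.
    assert (sumR (map f l1) <= sumR (map f u) + sumR (map f v)).
    { rewrite <- sumR_app, <- map_app. apply IH.
      - eapply NoDup_remove_1; eauto.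
      - intros x Hx. assert (Hx2 := Hinc x (or_intror Hx)).
        apply in_app_iff in Hx2. apply in_app_iff. destruct Hx2 as [?|[?|?]]; auto.
        subst; contradiction.
      - intros x Hx. apply Hpos. apply in_app_iff in Hx. apply in_app_iff.
        simpl; tauto. }
    unfold sumR in *; simpl.
    assert (0 <= f a) by (apply Hpos; apply in_app_iff; simpl; auto). lra.
Qed.

Lemma map_nth_seq (g : nat -> R) (M : list nat) s :
  (s <= length M)%nat ->
  map (fun i => g (nth i M 0%nat)) (seq 0 s) = map g (firstn s M).
Proof.
  revert s; induction M as [|a M IH]; intros s Hs.
  - simpl in Hs. assert (s = 0%nat) by lia. subst. reflexivity.
  - destruct s; [reflexivity|]. simpl. f_equal.
    rewrite <- seq_shift, map_map. simpl. apply IH. simpl in Hs; lia.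
Qed.

Lemma recv_power_eq P M t : (t <= length M)%nat ->
  recv_power P M t = sumR (map (fun m => P m (nth t M 0%nat)) (firstn t M)).
Proof.
  intros H. unfold recv_power, sumR.
  rewrite (map_nth_seq (fun m => P m (nth t M 0%nat))); auto.
Qed.

Lemma fold_min_le rs r : fold_left Rmin rs r <= r /\ forall y, In y rs -> fold_left Rmin rs r <= y.
Proof.
  revert r; induction rs as [|a rs IH]; intros r; simpl.
  - split; [lra | tauto].
  - destruct (IH (Rmin r a)) as [H1 H2]. split.
    + eapply Rle_trans; [apply H1| apply Rmin_l].
    + intros y [<-|Hy]; auto. eapply Rle_trans; [apply H1| apply Rmin_r].
Qed.

Lemma fold_min_glb x rs r : x <= r -> (forall y, In y rs -> x <= y) -> x <= fold_left Rmin rs r.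
Proof.
  revert r; induction rs as [|a rs IH]; intros r H1 H2; simpl; auto.
  apply IH; [apply Rmin_glb; auto; apply H2; simpl; auto| intros; apply H2; simpl; auto].
Qed.

Lemma Rmin_list_le l y : In y l -> Rmin_list l <= y.
Proof.
  destruct l as [|r rs]; simpl; [tauto|]. intros [<-|H]; [apply (proj1 (fold_min_le rs r))| apply (proj2 (fold_min_le rs r)); auto].
Qed.

Lemma Rmin_list_glb l x : l <> [] -> (forall y, In y l -> x <= y) -> x <= Rmin_list l.
Proof.
  destruct l as [|r rs]; simpl; [congruence|]. intros _ H. apply fold_min_glb; auto.
Qed.

Lemma firstn_in {A} n (l : list A) x : In x (firstn n l) -> In x l.
Proof. intros H. rewrite <- (firstn_skipn n l). apply in_app_iff; auto. Qed.

Lemma nna_props D P M : (1 <= D)%nat -> nna_reaches D P M ->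
  NoDup M /\ (forall m, In m M -> in_S D m) /\ nth 0 M 0%nat = 1%nat /\ M <> [] /\
  forall t, (1 <= t < length M)%nat ->
    nearest_neighbor D P (firstn t M) (nth t M 0%nat) /\ ~ In D (firstn t M).
Proof.
  intros HD1.
  induction 1 as [|M i HM IH HD Hnn Huniq].
  - split; [|split; [|split; [|split]]].
    + constructor; [simpl; auto| constructor].
    + intros m0 [<-|[]]. unfold in_S; lia.
    + reflexivity.
    + congruence.
    + intros t Ht; simpl in Ht; lia.
  - destruct IH as [Hnd [HS [H0 [Hne Ht]]]].
    assert (Hlen : (0 < length M)%nat) by (destruct M; simpl; [congruence|lia]).
    destruct Hnn as [HiS [HiM Hnn']].
    split; [|split; [|split; [|split]]].
    + apply NoDup_app; auto. constructor; [simpl; auto|constructor].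
      intros a Ha [<-|[]]; contradiction.
    + intros m0 Hm. apply in_app_iff in Hm. destruct Hm as [?|[<-|[]]]; auto.
    + rewrite app_nth1; auto.
    + destruct M; simpl; congruence.
    + intros t Htl. rewrite length_app in Htl. simpl in Htl.
      destruct (Nat.eq_dec t (length M)) as [->|Hne2].
      * rewrite nth_middle. rewrite <- (Nat.add_0_r (length M)), firstn_app_2. simpl.
        rewrite app_nil_r. split; [split; [|split]|]; auto.
      * assert (t < length M)%nat by lia.
        rewrite app_nth1 by auto. rewrite firstn_app.
        replace (t - length M)%nat with 0%nat by lia. simpl. rewrite app_nil_r.
        apply Ht; lia.
Qed.

Lemma last_nth_eq (l : list nat) d : l <> [] -> last l d = nth (length l - 1) l d.
Proof.
  induction l as [|a l IH]; [congruence|]. intros _.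
  destruct l as [|b l]; [reflexivity|].
  change (last (a :: b :: l) d) with (last (b :: l) d). rewrite IH by congruence.
  simpl. rewrite Nat.sub_0_r. reflexivity.
Qed.

Lemma first_out (Q M : list nat) k :
  (forall j, (j < k)%nat -> In (nth j M 0%nat) Q) \/
  exists s, (s < k)%nat /\ ~ In (nth s M 0%nat) Q /\ forall j, (j < s)%nat -> In (nth j M 0%nat) Q.
Proof.
  induction k as [|k IH].
  - left; intros; lia.
  - destruct IH as [H|[s [H1 [H2 H3]]]].
    + destruct (in_dec Nat.eq_dec (nth k M 0%nat) Q) as [Hi|Hn].
      * left; intros j Hj. destruct (Nat.eq_dec j k) as [->|]; auto. apply H; lia.
      * right; exists k; auto.
    + right; exists s; split; auto.
Qed.

Lemma NoDup_firstn' (l : list nat) n : NoDup l -> NoDup (firstn n l).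
Proof. intros H. rewrite <- (firstn_skipn n l) in H. eapply NoDup_app_remove_r; eauto. Qed.

Lemma rate_mono N a b : 0 < N -> 0 <= a -> a <= b ->
  / 2 * ln (1 + / N * a) <= / 2 * ln (1 + / N * b).
Proof.
  intros HN Ha Hab.
  assert (0 < / N) by (apply Rinv_0_lt_compat; auto).
  assert (0 <= / N * a) by (apply Rmult_le_pos; lra).
  assert (/ N * a <= / N * b) by (apply Rmult_le_compat_l; lra).
  apply Rmult_le_compat_l; [lra|].
  destruct (Rle_lt_or_eq_dec _ _ H1) as [Hl|He].
  - left; apply ln_increasing; lra.
  - rewrite He; lra.
Qed.

Theorem lemma4 (D : nat) (P : nat -> nat -> R) (N : R) (M1 M2 : list nat) :
  (2 <= D)%nat ->
  0 < N ->
  (forall i t, in_S D i -> in_S D t -> i <> t -> 0 < P i t) ->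
  nna_output D P M2 ->
  is_sd_route D M1 ->
  R_DF P N M2 >= R_DF P N M1.
Proof.
  intros HD HN HP [HR2 HDin] [[Hnd1 [HS1 Hh1]] Hlast].
  destruct (nna_props D P M2 ltac:(lia) HR2) as [Hnd2 [HS2 [H02 [Hne2 Ht2]]]].
  assert (Hl2 : (2 <= length M2)%nat).
  { destruct M2 as [|a [|b l]]; [congruence| |simpl; lia].
    simpl in H02, HDin. destruct HDin as [?|[]]; subst; lia. }
  destruct M1 as [|a1 M1']; [discriminate|]. simpl in Hh1. injection Hh1 as ->.
  set (M1 := (1%nat :: M1')) in *.
  assert (Hl1 : (2 <= length M1)%nat).
  { destruct M1' as [|b l]; [simpl in Hlast; lia|simpl; lia]. }
  assert (HlastD : nth (length M1 - 1) M1 0%nat = D).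
  { rewrite <- last_nth_eq by discriminate. auto. }
  apply Rle_ge. unfold R_DF at 1. apply Rmin_list_glb.
  { destruct (length M2 - 1)%nat eqn:E; [lia|discriminate]. }
  intros y Hy. apply in_map_iff in Hy. destruct Hy as [t [<- Ht]].
  apply in_seq in Ht.
  destruct (Ht2 t ltac:(lia)) as [Hnn HDQ].
  set (Q := firstn t M2) in *. set (i := nth t M2 0%nat) in *.
  assert (HQM : forall q, In q Q -> In q M2) by (intros; eapply firstn_in; eauto).
  assert (HndQ : NoDup Q) by (apply NoDup_firstn'; auto).
  destruct (first_out Q M1 (length M1)) as [Hall|[s [Hs1 [Hs2 Hs3]]]].
  { exfalso. apply HDQ. rewrite <- HlastD. apply Hall. lia. }
  assert (Hs0 : s <> 0%nat).
  { intros ->. apply Hs2. simpl.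
    assert (nth 0 Q 0%nat = 1%nat) by (unfold Q; rewrite nth_firstn;
      destruct (Nat.ltb_spec 0 t); [auto|lia]).
    rewrite <- H. apply nth_In. unfold Q; rewrite firstn_length_le; lia. }
  set (x := nth s M1 0%nat) in *.
  assert (HxS : in_S D x) by (apply HS1; apply nth_In; lia).
  assert (Hsub : forall y, In y (firstn s M1) -> In y Q).
  { intros z Hz. destruct (@In_nth nat (firstn s M1) z 0%nat Hz) as [j [Hj Hjz]].
    rewrite firstn_length_le in Hj by lia.
    rewrite nth_firstn in Hjz. destruct (Nat.ltb_spec j s); [|lia].
    subst z. apply Hs3; auto. }
  assert (Hpos : forall q, In q Q -> 0 <= P q x).
  { intros q Hq. left. apply HP; auto. intros ->. contradiction. }
  apply Rle_trans with (recv_rate P N M1 s).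
  { apply Rmin_list_le. apply in_map. apply in_seq. lia. }
  unfold recv_rate. apply rate_mono; auto.
  - rewrite recv_power_eq by lia. apply sum_nonneg. intros; apply Hpos; auto.
  - rewrite !recv_power_eq by lia. fold x. fold Q. fold i.
    apply Rle_trans with (sumR (map (fun m => P m x) Q)).
    + apply sum_sub; auto. apply NoDup_firstn'; auto.
    + apply sum_le_pointwise. intros q Hq.
      destruct (Nat.eq_dec x i) as [<-|Hne]; [lra|].
      destruct Hnn as [_ [_ Hnn]]. apply Rge_le. apply Hnn; auto.
Qed.
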